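(* Consider a cache network as described below, with caching gain $f(\mathbf{x})=\mathbb{E}_{z\sim P}[h(g_z(\mathbf{0}))-h(g_z(\mathbf{x}))]$ where $h(s)=s/(1-s)$. Let $\hat h^L(s)=\sum_{\ell=1}^L s^\ell$ be the $L$-th order Taylor polynomial of $h$ around $0$, let $f_z(\mathbf{x})=h(g_z(\mathbf{0}))-h(g_z(\mathbf{x}))$ and $\hat f_z^L(\mathbf{x})=\hat h^L(g_z(\mathbf{0}))-\hat h^L(g_z(\mathbf{x}))$, and let $\widehat{\nabla G_z^L}$ be the polynomial estimator built from $\hat f_z^L$ (used in Stochastic Continuous Greedy). Let $\bar s<1$ be the largest load among all edges when caches are empty, $\bar s=\max_z g_z(\mathbf{0})$. Then $$\big\|\nabla G_z(\mathbf{y})-\widehat{\nabla G_z^L}(\mathbf{y})\big\|_2\le2\sqrt{|V||\mathcal{C}|}\,\frac{\bar s^{L+1}}{1-\bar s}.$$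
   Context: Cache network: directed graph $(V,E)$, catalog of items $\mathcal{C}$, service rates $\mu_{(u,v)}>0$ for edges, a set of requests $\mathcal{R}$; each request $r$ has an item $i^r\in\mathcal{C}$, an arrival rate $\lambda^r>0$, and a path $p^r=(p^r_1,p^r_2,\dots)$ of nodes; $k_{p^r}(v)$ is the position of node $v$ on $p^r$. Caching decisions are $\mathbf{x}\in\{0,1\}^{|V||\mathcal{C}|}$, $x_{v,i}=1$ iff item $i$ is stored at node $v$. Edges are indexed by $z=(u,v)\in E$, drawn according to a distribution $P$, with load $g_{(u,v)}(\mathbf{x})=\frac{1}{\mu_{(u,v)}}\sum_{r\in\mathcal{R}:(v,u)\in p^r}\lambda^r\prod_{k'=1}^{k_{p^r}(v)}\big(1-x_{p^r_{k'},i^r}\big)$, assumed $<1$ when caches are empty. $G_z(\mathbf{y})=\mathbb{E}_{\mathbf{x}\sim\mathbf{y}}[f_z(\mathbf{x})]$ (independent Bernoulli$(y_{v,i})$ coordinates) is the multilinear relaxation. For a polynomial, its multilinearization $\dot p$ replaces every positive exponent by $1$; the polynomial estimator has coordinates $\dot{\hat f}{}_z^L([\mathbf{y}]_{+j})-\dot{\hat f}{}_z^L([\mathbf{y}]_{-j})$, where $[\mathbf{y}]_{\pm j}$ sets coordinate $j$ to $1$/$0$. *)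

(* Defs.v *)
From mathcomp Require Import all_boot all_order all_algebra.
From mathcomp Require Import mpoly.
Set Implicit Arguments. Unset Strict Implicit. Unset Printing Implicit Defensive.
Import Order.TTheory GRing.Theory Num.Theory.
Local Open Scope ring_scope.

Section CacheNetwork.
(* R : the reals (any real closed field); V nodes; C catalog; Req requests. *)
Variables (R : rcfType) (V C Req : finType).

Definition nvar := #|{: V * C}|.
Definition xvar (v : V) (i : C) : {mpoly R[nvar]} := 'X_(enum_rank (v, i)).

(* position of node v on path p, 1-indexed : k_p(v) *)
Definition kpos (p : seq V) (v : V) : nat := (index v p).+1.

Definition on_path (a b : V) (p : seq V) : bool := (a, b) \in zip p (behead p).

(* The load g_{(u,v)}(x) as a polynomial in the caching variables x_{v,i}:
   g_{(u,v)}(x) = 1/mu_{(u,v)} * sum_{r : (v,u) in p^r} lambda^r *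
                  prod_{k'=1}^{k_{p^r}(v)} (1 - x_{p^r_{k'}, i^r}) *)
Definition gpoly (mu : V -> V -> R) (item : Req -> C) (lam : Req -> R)
  (path : Req -> seq V) (z : V * V) : {mpoly R[nvar]} :=
  let: (u, v) := z in
  (mu u v)^-1 *: \sum_(r : Req | on_path v u (path r))
     lam r *: \prod_(k < kpos (path r) v)
                 (1 - xvar (nth v (path r) k) (item r)).

Definition evalVC (p : {mpoly R[nvar]}) (y : V * C -> R) : R :=
  p.@[fun k => y (enum_val k)].

Definition h (s : R) : R := s / (1 - s).
Definition hL (L : nat) (s : R) : R := \sum_(1 <= l < L.+1) s ^+ l.
Definition hLpoly (L : nat) (p : {mpoly R[nvar]}) : {mpoly R[nvar]} :=
  \sum_(1 <= l < L.+1) p ^+ l.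

Variables (mu : V -> V -> R) (item : Req -> C) (lam : Req -> R)
  (path : Req -> seq V).

Definition g (z : V * V) (x : V * C -> R) : R :=
  evalVC (gpoly mu item lam path z) x.

Definition g0 (z : V * V) : R := g z (fun _ => 0).

Definition fz (z : V * V) (x : V * C -> bool) : R :=
  h (g0 z) - h (g z (fun j => (x j)%:R)).

Definition fzL (L : nat) (z : V * V) : {mpoly R[nvar]} :=
  (hL L (g0 z))%:MP - hLpoly L (gpoly mu item lam path z).

(* Multilinear relaxation G_z(y) = E_{x ~ y}[f_z(x)], x with independent
   Bernoulli(y_{v,i}) coordinates, written as a polynomial in y. *)
Definition Gpoly (z : V * V) : {mpoly R[nvar]} :=
  \sum_(x : {ffun V * C -> bool})
     fz z x *: \prod_(j : V * C)
        (if x j then xvar j.1 j.2 else 1 - xvar j.1 j.2).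

Definition gradG (z : V * V) (y : V * C -> R) (j : V * C) : R :=
  evalVC ((Gpoly z)^`M(enum_rank j)) y.

End CacheNetwork.

(* multilinearization: replace every positive exponent by 1 *)
Definition mlin (R : ringType) (n : nat) (p : {mpoly R[n]}) : {mpoly R[n]} :=
  \sum_(m <- msupp p) p@_m *: \prod_(k < n | (0 < m k)%N) 'X_k.

Definition setcoord (T : eqType) (R : Type) (y : T -> R) (j : T) (a : R) : T -> R :=
  fun k => if k == j then a else y k.

Definition gradGL (R : rcfType) (V C Req : finType)
  (mu : V -> V -> R) (item : Req -> C) (lam : Req -> R) (path : Req -> seq V)
  (L : nat) (z : V * V) (y : V * C -> R) (j : V * C) : R :=
  let q := mlin (fzL mu item lam path L z) in
  evalVC q (setcoord y j 1) - evalVC q (setcoord y j 0).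

Definition norm2 (R : rcfType) (T : finType) (w : T -> R) : R :=
  Num.sqrt (\sum_(j : T) w j ^+ 2).

(* Main.v *)
Require Import Defs.
From mathcomp Require Import all_boot all_order all_algebra.
From mathcomp Require Import mpoly.
From mathcomp Require Import ring lra.
Set Implicit Arguments. Unset Strict Implicit.
Import Order.TTheory GRing.Theory Num.Theory.
Local Open Scope ring_scope.

Section Helpers.
Variables (R : rcfType) (V C Req : finType).
Variables (mu : V -> V -> R) (item : Req -> C) (lam : Req -> R)
  (path : Req -> seq V).

Definition W (y : V * C -> R) (x : {ffun V * C -> bool}) : R :=
  \prod_j (if x j then y j else 1 - y j).
Definition bin (x : {ffun V * C -> bool}) : V * C -> R := fun j => (x j)%:R.

Lemma evalVC_xvar (y : V * C -> R) v i : evalVC (xvar R v i) y = y (v, i).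
Proof. by rewrite /evalVC /xvar mevalXU enum_rankK. Qed.

Lemma evalVC_sum (I : Type) (r : seq I) (P : pred I) (F : I -> {mpoly R[nvar V C]}) y :
  evalVC (\sum_(i <- r | P i) F i) y = \sum_(i <- r | P i) evalVC (F i) y.
Proof. exact: (big_morph _ (mevalD _) (meval0 _)). Qed.
Lemma evalVC_prod (I : Type) (r : seq I) (P : pred I) (F : I -> {mpoly R[nvar V C]}) y :
  evalVC (\prod_(i <- r | P i) F i) y = \prod_(i <- r | P i) evalVC (F i) y.
Proof. exact: (big_morph _ (mevalM _) (meval1 _)). Qed.
Lemma evalVC_Z c (p : {mpoly R[nvar V C]}) (y : V * C -> R) : evalVC (c *: p) y = c * evalVC p y.
Proof. exact: mevalZ. Qed.
Lemma evalVC_B (p q : {mpoly R[nvar V C]}) (y : V * C -> R) : evalVC (p - q) y = evalVC p y - evalVC q y.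
Proof. exact: mevalB. Qed.
Lemma evalVC_N (p : {mpoly R[nvar V C]}) (y : V * C -> R) : evalVC (- p) y = - evalVC p y.
Proof. exact: mevalN. Qed.
Lemma evalVC_1 (y : V * C -> R) : evalVC (1 : {mpoly R[nvar V C]}) y = 1.
Proof. exact: meval1. Qed.
Lemma evalVC_C c (y : V * C -> R) : evalVC (c%:MP : {mpoly R[nvar V C]}) y = c.
Proof. exact: mevalC. Qed.

Lemma evalG z y : evalVC (Gpoly mu item lam path z) y = \sum_(x : {ffun V * C -> bool}) fz mu item lam path z x * W y x.
Proof.
rewrite /Gpoly evalVC_sum; apply: eq_bigr => x _.
rewrite evalVC_Z evalVC_prod; congr (_ * _); apply: eq_bigr => j _.
by case: (x j); rewrite ?evalVC_B ?evalVC_1 evalVC_xvar -?surjective_pairing.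
Qed.

Lemma sumW y : \sum_(x : {ffun V * C -> bool}) W y x = 1.
Proof.
rewrite /W -(bigA_distr_bigA (fun j (b : bool) => if b then y j else 1 - y j)).
by apply: big1 => j _; rewrite big_bool /=; lra.
Qed.

Lemma W_ge0 y x : (forall j, 0 <= y j <= 1) -> 0 <= W y x.
Proof.
move=> hy; apply: prodr_ge0 => j _; case: (x j); have := hy j; lra.
Qed.


Lemma dXvar (j j0 : V * C) :
  (xvar R j.1 j.2)^`M(enum_rank j0) = ((j == j0)%:R)%:MP.
Proof.
rewrite /xvar -surjective_pairing mderivX mnm1E.
have [->|ne] := eqVneq j j0.
  rewrite !eqxx.
  have -> : (U_(enum_rank j0) - U_(enum_rank j0))%MM = 0%MM.
    by apply/mnmP => l; rewrite mnmBE subnn mnm0E.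
  by rewrite mpolyX0 scale1r mpolyC1.
rewrite (inj_eq enum_rank_inj) (negbTE ne) scale0r.
by apply/esym/eqP; rewrite mpolyC_eq0.
Qed.

Lemma d1 k : (1 : {mpoly R[nvar V C]})^`M(k) = 0.
Proof. by rewrite -mpolyC1 mderivC. Qed.

Definition Fx (x : {ffun V * C -> bool}) (j : V * C) : {mpoly R[nvar V C]} :=
  if x j then xvar R j.1 j.2 else 1 - xvar R j.1 j.2.

Lemma Wset x j0 (y : V * C -> R) a :
  W (setcoord y j0 a) x = (if x j0 then a else 1 - a) * \prod_(j | j != j0) evalVC (Fx x j) y.
Proof.
rewrite /W (bigD1 j0) //= /setcoord eqxx; congr (_ * _).
apply: eq_bigr => j hj; rewrite (negbTE hj) /Fx.
by case: (x j); rewrite ?evalVC_B ?evalVC_1 evalVC_xvar -?surjective_pairing.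
Qed.

Lemma deriv_prod x j0 (y : V * C -> R) :
  evalVC ((\prod_j Fx x j)^`M(enum_rank j0)) y
  = W (setcoord y j0 1) x - W (setcoord y j0 0) x.
Proof.
rewrite (bigD1 j0) //= mderivM.
have -> : (\prod_(j | j != j0) Fx x j)^`M(enum_rank j0) = 0.
  apply: (big_ind (fun p : {mpoly R[nvar V C]} => p^`M(enum_rank j0) = 0)).
  - exact: d1.
  - by move=> p q hp hq; rewrite mderivM hp hq mul0r mulr0 addr0.
  move=> j hj; rewrite /Fx; case: (x j); rewrite ?mderivB ?d1 dXvar (negbTE hj);
    by rewrite mpolyC0 ?subr0.
rewrite mulr0 addr0 !Wset.
rewrite /evalVC mevalM -!/(evalVC _ _) evalVC_prod -mulrBl /Fx.
case: (x j0); rewrite ?mderivB ?d1 dXvar eqxx ?sub0r ?evalVC_N evalVC_C; congr (_ * _); rewrite /= ?subrr ?sub0r subr0 //.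
Qed.


Lemma gradG_eq z (y : V * C -> R) j0 :
  gradG mu item lam path z y j0 = \sum_(x : {ffun V * C -> bool})
     fz mu item lam path z x * (W (setcoord y j0 1) x - W (setcoord y j0 0) x).
Proof.
rewrite /gradG /Gpoly (big_morph _ (mderivD (enum_rank j0)) (mderiv0 _ (enum_rank j0))) evalVC_sum; apply: eq_bigr => x _.
by rewrite mderivZ evalVC_Z -/(Fx x) deriv_prod.
Qed.

Lemma prodbin (m : 'X_{1.. nvar V C}) (x : {ffun V * C -> bool}) :
  \prod_i (bin x (enum_val i)) ^+ m i = \prod_j (bin x j) ^+ m (enum_rank j).
Proof.
rewrite (reindex (@enum_rank _) (onW_bij _ (@enum_rank_bij _))) /=.
by apply: eq_bigr => j _; rewrite enum_rankK.
Qed.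

Lemma mono (m : 'X_{1.. nvar V C}) (y : V * C -> R) :
  \prod_(k < nvar V C | (0 < m k)%N) y (enum_val k)
  = \sum_(x : {ffun V * C -> bool}) (\prod_i (bin x (enum_val i)) ^+ m i) * W y x.
Proof.
rewrite big_mkcond (reindex (@enum_rank _) (onW_bij _ (@enum_rank_bij _))) /=.
under [RHS]eq_bigr do rewrite prodbin.
rewrite /W.
under [RHS]eq_bigr do rewrite -big_split /=.
rewrite -(bigA_distr_bigA (fun j (b : bool) => (b%:R) ^+ m (enum_rank j) * (if b then y j else 1 - y j))).
apply: eq_bigr => j _; rewrite enum_rankK big_bool /= expr1n expr0n mul1r.
case: (m (enum_rank j)) => [|e] /=; rewrite ?mul1r ?mul0r; lra.
Qed.

Lemma mlinE (p : {mpoly R[nvar V C]}) (y : V * C -> R) :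
  evalVC (mlin p) y = \sum_(x : {ffun V * C -> bool}) evalVC p (bin x) * W y x.
Proof.
rewrite /mlin evalVC_sum.
under [RHS]eq_bigr do rewrite /evalVC mevalE mulr_suml.
rewrite exchange_big /=; apply: eq_bigr => m _.
rewrite evalVC_Z evalVC_prod.
under [RHS]eq_bigr do rewrite -mulrA.
rewrite -mulr_sumr; congr (_ * _).
rewrite -mono; apply: eq_bigr => k _.
by rewrite /evalVC mevalXU.
Qed.


Lemma evalg u v (t : V * C -> R) :
  g mu item lam path (u, v) t = (mu u v)^-1 * \sum_(r : Req | on_path v u (path r))
     lam r * \prod_(k < kpos (path r) v) (1 - t (nth v (path r) k, item r)).
Proof.
rewrite /g /gpoly evalVC_Z evalVC_sum; congr (_ * _); apply: eq_bigr => r _.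
rewrite evalVC_Z evalVC_prod; congr (_ * _); apply: eq_bigr => k _.
by rewrite evalVC_B evalVC_1 evalVC_xvar.
Qed.

Lemma g_bounds u v (t : V * C -> R) :
  0 < mu u v -> (forall r, 0 < lam r) -> (forall j, 0 <= t j <= 1) ->
  0 <= g mu item lam path (u, v) t <= g0 mu item lam path (u, v).
Proof.
move=> hmu hlam ht; rewrite /g0 !evalg.
have hmu' : 0 <= (mu u v)^-1 by rewrite invr_ge0 ltW.
apply/andP; split.
  apply: mulr_ge0 => //; apply: sumr_ge0 => r _; apply: mulr_ge0; first exact: ltW.
  by apply: prodr_ge0 => k _; have := ht (nth v (path r) k, item r); lra.
apply: ler_wpM2l => //; apply: ler_sum => r _; apply: ler_wpM2l; first exact: ltW.
rewrite [X in _ <= X]big1; last by move=> k _ /=; rewrite subr0.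
by apply: prodr_ile1 => k _; have := ht (nth v (path r) k, item r); lra.
Qed.

Lemma g0_ge0 u v : 0 < mu u v -> (forall r, 0 < lam r) -> 0 <= g0 mu item lam path (u, v).
Proof.
move=> hmu hlam.
have h01 : forall j : V * C, 0 <= (fun _ => 0 : R) j <= 1 by move=> j; rewrite lexx ler01.
have /andP[h1 h2] := @g_bounds u v (fun _ => 0) hmu hlam h01.
exact: le_trans h1 h2.
Qed.


Lemma evalVC_X (p : {mpoly R[nvar V C]}) (y : V * C -> R) l :
  evalVC (p ^+ l) y = evalVC p y ^+ l.
Proof.
elim: l => [|l ih]; first by rewrite !expr0 evalVC_1.
by rewrite !exprS -ih; exact: mevalM.
Qed.

Lemma evalfzL L z (t : V * C -> R) :
  evalVC (fzL mu item lam path L z) t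
  = hL L (g0 mu item lam path z) - hL L (g mu item lam path z t).
Proof.
rewrite /fzL evalVC_B evalVC_C /hLpoly evalVC_sum; congr (_ - _).
by rewrite /hL; apply: eq_bigr => l _; rewrite evalVC_X.
Qed.

Lemma hdiff L (s : R) : s != 1 -> h s - hL L s = s ^+ L.+1 / (1 - s).
Proof.
move=> hs; have hs' : 1 - s != 0 by rewrite subr_eq0 eq_sym.
elim: L => [|L ih].
  by rewrite /hL big_geq // subr0 expr1 /h.
rewrite /hL big_nat_recr //= -/(hL L s) opprD addrA ih.
rewrite [s ^+ L.+2]exprS; set t := s ^+ L.+1; field; exact: hs'.
Qed.

Lemma rr_mono n (a b : R) : 0 <= a -> a <= b -> b < 1 ->
  a ^+ n / (1 - a) <= b ^+ n / (1 - b).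
Proof.
move=> ha hab hb; apply: ler_pM.
- exact: exprn_ge0.
- by rewrite invr_ge0; lra.
- by apply: lerXn2r => //; rewrite nnegrE //; apply: le_trans hab.
rewrite lef_pV2 ?posrE; lra.
Qed.

End Helpers.

Theorem theorem5 (R : rcfType) (V C Req : finType)
  (E : {set V * V})                    (* directed edges *)
  (mu : V -> V -> R)                   (* service rates *)
  (item : Req -> C) (lam : Req -> R) (path : Req -> seq V)
  (hmu : forall u v, (u, v) \in E -> 0 < mu u v)
  (hlam : forall r, 0 < lam r)
  (hpath_ne : forall r, path r != [::])
  (hpath_uniq : forall r, uniq (path r))
  (hpath_E : forall r a b, on_path a b (path r) -> (a, b) \in E)
  (hload : forall e, e \in E -> g0 mu item lam path e < 1)
  (L : nat) (z : V * V) (hz : z \in E)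
  (y : V * C -> R) (hy : forall j, 0 <= y j <= 1) :
  let sbar := \big[Num.max/0]_(e in E) g0 mu item lam path e in
  norm2 (fun j => gradG mu item lam path z y j - gradGL mu item lam path L z y j)
  <= 2 * Num.sqrt (#|V|%:R * #|C|%:R) * (sbar ^+ L.+1 / (1 - sbar)).
Proof.
cbv zeta. set sbar := \big[Num.max/0]_(e in E) _.
case: z hz => u v hz.
have hsb1 : sbar < 1.
  rewrite /sbar; apply: (big_ind (fun s => s < 1)).
  - exact: ltr01.
  - by move=> a b ha hb; rewrite gt_max ha hb.
  - by move=> e he; apply: hload.
have hg0sb : g0 mu item lam path (u, v) <= sbar.
  by rewrite /sbar (bigD1 (u, v)) //= le_max lexx.
have hg0 : 0 <= g0 mu item lam path (u, v) by apply: g0_ge0 => //; exact: hmu.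
set B := sbar ^+ L.+1 / (1 - sbar).
have hB : 0 <= B by rewrite /B divr_ge0 ?exprn_ge0; lra.
set g0z := g0 mu item lam path (u, v).
pose phi (x : {ffun V * C -> bool}) := fz mu item lam path (u, v) x
   - evalVC (fzL mu item lam path L (u, v)) (@bin R V C x).
have hphi : forall x, 0 <= phi x <= B.
  move=> x.
  have /andP[gb0 gb1] := @g_bounds R V C Req mu item lam path u v (@bin R V C x) (hmu _ _ hz) hlam
     (fun j => ltac:(rewrite /bin; case: (x j) => /=; lra)).
  rewrite /phi /fz evalfzL -/g0z.
  set gb := g mu item lam path (u, v) (fun j => (x j)%:R).
  have -> : h g0z - h gb - (hL L g0z - hL L gb) = (h g0z - hL L g0z) - (h gb - hL L gb) by ring.
  have gb0' : 0 <= gb by exact: gb0.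
  have gb1' : gb <= g0z by exact: gb1.
  clear gb0 gb1.
  rewrite !hdiff; last (by apply/eqP => he; lra); last (by apply/eqP => he; lra).
  have r1 := @rr_mono R L.+1 gb g0z gb0' gb1' ltac:(lra).
  have r2 := @rr_mono R L.+1 g0z sbar hg0 hg0sb hsb1.
  have r3 := @rr_mono R L.+1 0 gb (lexx 0) gb0' ltac:(lra).
  rewrite expr0n /= mul0r in r3.
  rewrite -/B in r2; apply/andP; split; lra.
have hPhi : forall t : V * C -> R, (forall j, 0 <= t j <= 1) ->
    0 <= \sum_(x : {ffun V * C -> bool}) phi x * W t x <= B.
  move=> t ht; apply/andP; split.
    apply: sumr_ge0 => x _; apply: mulr_ge0; first by case/andP: (hphi x).
    exact: W_ge0.
  apply: (@le_trans _ _ (\sum_(x : {ffun V * C -> bool}) B * W t x)).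
    apply: ler_sum => x _; apply: ler_wpM2r; first exact: W_ge0.
    by case/andP: (hphi x).
  by rewrite -mulr_sumr sumW mulr1.
have hset : forall j (a : R), 0 <= a <= 1 -> forall k, 0 <= setcoord y j a k <= 1.
  by move=> j a ha k; rewrite /setcoord; case: (k == j).
have hcoord : forall j, `|gradG mu item lam path (u, v) y j - gradGL mu item lam path L (u, v) y j| <= B.
  move=> j.
  have e1 : gradG mu item lam path (u, v) y j - gradGL mu item lam path L (u, v) y j
    = \sum_(x : {ffun V * C -> bool}) phi x * W (setcoord y j 1) x
      - \sum_(x : {ffun V * C -> bool}) phi x * W (setcoord y j 0) x.
    rewrite gradG_eq /gradGL /= !mlinE /phi.
    under eq_bigr do rewrite mulrBr.
    rewrite sumrB.
    under [X in _ = X - _]eq_bigr do rewrite mulrBl.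
    under [X in _ = _ - X]eq_bigr do rewrite mulrBl.
    rewrite !sumrB; ring.
  rewrite e1.
  have h1 := hPhi _ (hset j 1 ltac:(by rewrite ler01 lexx)).
  have h0 := hPhi _ (hset j 0 ltac:(by rewrite ler01 lexx)).
  rewrite ler_norml; apply/andP; split; lra.
rewrite /norm2.
have hN : 0 <= (#|V|%:R * #|C|%:R : R) by rewrite mulr_ge0 ?ler0n.
have hS : \sum_(j : V * C) (gradG mu item lam path (u, v) y j - gradGL mu item lam path L (u, v) y j) ^+ 2
    <= #|V|%:R * #|C|%:R * B ^+ 2.
  apply: (@le_trans _ _ (\sum_(j : V * C) B ^+ 2)).
    apply: ler_sum => j _; have := hcoord j; rewrite ler_norml => /andP[a b]; nra.
  rewrite sumr_const (_ : #|_| = #|V| * #|C|)%N; last by rewrite -card_prod; apply: eq_card. by rewrite -[B ^+ 2 *+ _]mulr_natr natrM mulrC.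
have hR : 0 <= 2 * Num.sqrt (#|V|%:R * #|C|%:R) * B.
  by apply: mulr_ge0 => //; apply: mulr_ge0; [exact: ler0n | exact: sqrtr_ge0].
rewrite -[X in _ <= X]ger0_norm // -sqrtr_sqr ler_sqrt ?sqr_ge0 //.
apply: (le_trans hS).
rewrite !exprMn sqr_sqrtr //.
have hB2 : 0 <= B ^+ 2 by exact: sqr_ge0.
set N := (#|V|%:R * #|C|%:R : R) in hN hB2 *.
rewrite -!exprMn -/B. have hQ : 0 <= N * B ^+ 2 by exact: mulr_ge0. rewrite -mulrA. set Q := N * B ^+ 2 in hQ *. rewrite expr2. lra.
Qed.
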